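(* For all $v,r,t\in\mathbb{R}$, $$|v|+|r-v|+|r+t-v|-|t-v|+|r-t|-|t|\geq\max\left(|r|,\,|v|-|r|\right).$$ *)

(* Defs.v *)
From Stdlib Require Import Reals Lra.

(* Main.v *)
Require Import Defs.
From Stdlib Require Import Reals Lra.
Open Scope R_scope.

Theorem lemma2p2p5 (v r t : R) :
  Rabs v + Rabs (r - v) + Rabs (r + t - v) - Rabs (t - v) + Rabs (r - t) - Rabs t
  >= Rmax (Rabs r) (Rabs v - Rabs r).
Proof.
  unfold Rmax.
  destruct (Rle_dec (Rabs r) (Rabs v - Rabs r));
  unfold Rabs;
  repeat match goal with |- context [Rcase_abs ?x] => destruct (Rcase_abs x) end;
  repeat match goal with H : context [Rcase_abs ?x] |- _ => destruct (Rcase_abs x) end;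
  lra.
Qed.
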